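(* Let $b>-1$, $b\neq0$, and let $C$ be the curve $y^2+(x^2-1)(x^2+b)=0$; write this equation as $y^2+x^4+Ax^2+B=0$ (so $A=b-1$, $B=-b$). Then the convex hull of $C(\mathbb{R})$ in $\mathbb{R}^2$ is the set of $(x,y)\in\mathbb{R}^2$ for which there exist $u_2,u_3,u_4,v_1,v_2\in\mathbb{R}$ such that $$\begin{pmatrix}1&x&u_2&y\\ x&u_2&u_3&v_1\\ u_2&u_3&u_4&v_2\\ y&v_1&v_2&-B-Au_2-u_4\end{pmatrix}\succeq0.$$
   Context: $S\succeq0$ means the real symmetric matrix $S$ is positive semidefinite. *)

(* Defs.v *)
From HB Require Import structures.
From mathcomp Require Import all_boot all_order all_algebra.
Set Implicit Arguments. Unset Strict Implicit. Unset Printing Implicit Defensive.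
Import Order.TTheory GRing.Theory Num.Theory.
Local Open Scope ring_scope.

Definition psd (R : numDomainType) (n : nat) (S : 'M[R]_n) : Prop :=
  S^T = S /\ forall v : 'cV[R]_n, 0 <= (v^T *m S *m v) 0 0.

Definition on_curve (R : numDomainType) (A B : R) (p : R * R) : Prop :=
  p.2 ^+ 2 + p.1 ^+ 4 + A * p.1 ^+ 2 + B = 0.

Definition conv_hull (R : numDomainType) (P : R * R -> Prop) (p : R * R) : Prop :=
  exists (n : nat) (w : 'I_n -> R) (q : 'I_n -> R * R),
    [/\ forall i, 0 <= w i,
        \sum_(i < n) w i = 1,
        forall i, P (q i),
        p.1 = \sum_(i < n) w i * (q i).1 &
        p.2 = \sum_(i < n) w i * (q i).2].

Definition mom_mx (R : numDomainType) (A B x y u2 u3 u4 v1 v2 : R) : 'M[R]_4 :=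
  \matrix_(i < 4, j < 4)
    nth 0 (nth [::] [:: [:: 1; x; u2; y];
                        [:: x; u2; u3; v1];
                        [:: u2; u3; u4; v2];
                        [:: y; v1; v2; - B - A * u2 - u4]] i) j.

(* Main.v *)
Require Import Defs.
From HB Require Import structures.
From mathcomp Require Import all_boot all_order all_algebra.
From Stdlib Require Import Ring.
Import Order.TTheory GRing.Theory Num.Theory.
Local Open Scope ring_scope.

Section S.
Variable R : rcfType.
Definition radd (x y : R) : R := x + y.
Definition rmul (x y : R) : R := x * y.
Definition ropp (x : R) : R := - x.
Definition rsub (x y : R) : R := x - y.
Definition rone : R := 1.
Definition rzero : R := 0.
Lemma R_rt : @ring_theory (Num.RealClosedField.sort R) rzero rone radd rmul rsub ropp eq.
Proof. rewrite /radd /rmul /ropp /rsub /rone /rzero.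
split; [exact: add0r|exact: addrC|exact: addrA|exact: mul1r|exact: mulrC|exact: mulrA|exact: mulrDl|by []|exact: subrr]. Qed.
Add Ring Rr : R_rt.
Lemma raddE (x y : R) : x + y = radd x y. Proof. by []. Qed.
Lemma rmulE (x y : R) : x * y = rmul x y. Proof. by []. Qed.
Lemma roppE (x : R) : - x = ropp x. Proof. by []. Qed.
Lemma roneE : 1 = rone :> R. Proof. by []. Qed.
Lemma rzeroE : 0 = rzero :> R. Proof. by []. Qed.
Ltac rr := match goal with |- ?a = ?b => change (@eq (Num.RealClosedField.sort R) a b) end;
  rewrite ?exprS ?expr0 ?raddE ?rmulE ?roppE ?roneE ?rzeroE; ring.

Definition Fq (A B p0 p1 p2 p3 m0 m1 m2 m3 m4 m5 m6 m7 : R) : R :=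
  (p0 * p0 - B * (p3 * p3))  *  m0 + (p0 * p1+p1 * p0)  *  m1 + (p0 * p2+p2 * p0 + p1 * p1 - A * (p3 * p3))  *  m2
  + (p0 * p3+p3 * p0) * m3 + (p1 * p2+p2 * p1) * m4 + (p1 * p3+p3 * p1) * m5 + (p2 * p2 - p3 * p3) * m6
  + (p2 * p3+p3 * p2) * m7.

Lemma qform (A B x y u2 u3 u4 v1 v2 : R) (v : 'cV[R]_4) :
  (v^T *m mom_mx A B x y u2 u3 u4 v1 v2 *m v) 0 0 =
  Fq A B (v ord0 0) (v (lift ord0 ord0) 0) (v (lift ord0 (lift ord0 ord0)) 0)
     (v (lift ord0 (lift ord0 (lift ord0 ord0))) 0) 1 x u2 y u3 v1 u4 v2.
Proof.
rewrite /mom_mx !mxE !big_ord_recl !big_ord0 /=. rewrite !mxE !big_ord_recl !big_ord0 /=.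
rewrite !mxE /=. rewrite /Fq. rr.
Qed.

Lemma qform_s (A B x y u2 u3 u4 v1 v2 a b c d : R) :
  ((\col_(i < 4) nth 0 [:: a; b; c; d] i)^T *m mom_mx A B x y u2 u3 u4 v1 v2
     *m (\col_(i < 4) nth 0 [:: a; b; c; d] i)) 0 0 =
  Fq A B a b c d 1 x u2 y u3 v1 u4 v2.
Proof. by rewrite qform !mxE. Qed.

Lemma mom_sym (A B x y u2 u3 u4 v1 v2 : R) :
  (mom_mx A B x y u2 u3 u4 v1 v2)^T = mom_mx A B x y u2 u3 u4 v1 v2.
Proof.
apply/matrixP => i j; rewrite !mxE.
by case: i => [[|[|[|[|?]]]] ?] //; case: j => [[|[|[|[|?]]]] ?].
Qed.

Lemma Fq_sum (A B p0 p1 p2 p3 : R) n (w : 'I_n -> R) (m0 m1 m2 m3 m4 m5 m6 m7 : 'I_n -> R) :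
  Fq A B p0 p1 p2 p3 (\sum_i w i * m0 i) (\sum_i w i * m1 i) (\sum_i w i * m2 i)
    (\sum_i w i * m3 i) (\sum_i w i * m4 i) (\sum_i w i * m5 i) (\sum_i w i * m6 i)
    (\sum_i w i * m7 i) =
  \sum_i w i * Fq A B p0 p1 p2 p3 (m0 i) (m1 i) (m2 i) (m3 i) (m4 i) (m5 i) (m6 i) (m7 i).
Proof.
rewrite /Fq !mulr_sumr -!big_split /=; apply: eq_bigr => i _; rr.
Qed.

Lemma Fq_pt (A B p0 p1 p2 p3 a c : R) :
  c ^+ 2 + a ^+ 4 + A * a ^+ 2 + B = 0 ->
  Fq A B p0 p1 p2 p3 1 a (a ^+ 2) c (a ^+ 3) (a * c) (a ^+ 4) (a ^+ 2 * c) =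
  (p0 + p1 * a + p2 * a ^+ 2 + p3 * c) ^+ 2.
Proof.
move=> h.
transitivity ((p0 + p1 * a + p2 * a ^+ 2 + p3 * c) ^+ 2 - p3 * p3 * (c ^+ 2 + a ^+ 4 + A * a ^+ 2 + B)).
  rewrite /Fq; rr.
by rewrite h mulr0 subr0.
Qed.

Lemma curve_pt (b x t : R) : t * t = (1 - x * x) * (x * x + b) ->
  on_curve (b - 1) (- b) (x, t).
Proof.
move=> h; rewrite /on_curve /= expr2 h; rr.
Qed.

Lemma conv4 (P : R * R -> Prop) (w1 w2 w3 w4 : R) (p1 p2 p3 p4 : R * R) (p : R * R) :
  0 <= w1 -> 0 <= w2 -> 0 <= w3 -> 0 <= w4 -> w1 + w2 + w3 + w4 = 1 ->
  P p1 -> P p2 -> P p3 -> P p4 ->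
  p.1 = w1 * p1.1 + w2 * p2.1 + w3 * p3.1 + w4 * p4.1 ->
  p.2 = w1 * p1.2 + w2 * p2.2 + w3 * p3.2 + w4 * p4.2 ->
  conv_hull P p.
Proof.
move=> h1 h2 h3 h4 hs P1 P2 P3 P4 e1 e2.
exists 4, (fun i : 'I_4 => nth 0 [:: w1; w2; w3; w4] i),
  (fun i : 'I_4 => nth (0, 0) [:: p1; p2; p3; p4] i).
split.
- by case => [[|[|[|[|?]]]] ?].
- by rewrite !big_ord_recl big_ord0 /= addr0 !addrA.
- by case => [[|[|[|[|?]]]] ?].
- by rewrite !big_ord_recl big_ord0 /= addr0 !addrA.
- by rewrite !big_ord_recl big_ord0 /= addr0 !addrA.
Qed.

Lemma dir1 (b x y : R) : conv_hull (on_curve (b - 1) (- b)) (x, y) ->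
  exists u2 u3 u4 v1 v2 : R, psd (mom_mx (b - 1) (- b) x y u2 u3 u4 v1 v2).
Proof.
case=> n [w [q [hw hs hq ex ey]]]; rewrite /= in ex ey.
exists (\sum_i w i * (q i).1 ^+ 2), (\sum_i w i * (q i).1 ^+ 3), (\sum_i w i * (q i).1 ^+ 4),
  (\sum_i w i * ((q i).1 * (q i).2)), (\sum_i w i * ((q i).1 ^+ 2 * (q i).2)).
split; first exact: mom_sym.
move=> v; rewrite qform.
have e1 : \sum_i w i * 1 = 1 by rewrite -[RHS]hs; apply: eq_bigr => i _; rewrite mulr1.
rewrite -[X in Fq _ _ _ _ _ _ X _ _ _ _ _ _ _]e1 ex ey.
rewrite (Fq_sum _ _ _ _ _ _ _ w (fun i => 1) (fun i => (q i).1) (fun i => (q i).1 ^+ 2)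
  (fun i => (q i).2) (fun i => (q i).1 ^+ 3) (fun i => (q i).1 * (q i).2)
  (fun i => (q i).1 ^+ 4) (fun i => (q i).1 ^+ 2 * (q i).2)).
apply: sumr_ge0 => i _; apply: mulr_ge0; first exact: hw.
by rewrite Fq_pt ?sqr_ge0 //; apply: hq.
Qed.

Lemma pm_ge0 (a t : R) : `|a| <= t -> 0 <= t + a /\ 0 <= t - a.
Proof.
rewrite ler_norml => /andP [h1 h2]; split; last by rewrite subr_ge0.
have : 0 <= a - - t by rewrite subr_ge0.
by rewrite opprK addrC.
Qed.

Lemma abs_le_sqrt (a c : R) : a * a <= c -> `|a| <= Num.sqrt c.
Proof. by move=> h; rewrite -sqrtr_sqr expr2; apply: ler_wsqrtr. Qed.

Lemma inv_pos (t : R) : 0 < t -> (t + t) * (t + t)^-1 = 1 /\ 0 <= (t + t)^-1.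
Proof.
move=> ht; have htt : 0 < t + t by apply: addr_gt0.
split; first by rewrite mulfV // lt0r_neq0.
by rewrite invr_ge0 ltW.
Qed.

Lemma sq_ge0 (a : R) : 0 <= a * a.
Proof. by rewrite -expr2 sqr_ge0. Qed.

Lemma dir2 (b x y : R) (hb1 : -1 < b) (u2 u3 u4 v1 v2 : R) :
  psd (mom_mx (b - 1) (- b) x y u2 u3 u4 v1 v2) -> conv_hull (on_curve (b - 1) (- b)) (x, y).
Proof.
case=> _ hpsd.
have hQ : forall a c d e, 0 <= Fq (b-1) (-b) a c d e 1 x u2 y u3 v1 u4 v2.
  by move=> a c d e; rewrite -qform_s; apply: hpsd.
case: (lerP (1 - b) (x * x + x * x)) => hd.
- have key : 0 <= (1 - x * x) * (x * x + b) - y * y.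
    have -> : (1 - x * x) * (x * x + b) - y * y =
      Fq (b-1) (-b) (-y) 0 0 1 1 x u2 y u3 v1 u4 v2 +
      Fq (b-1) (-b) (-(x * x)) 0 1 0 1 x u2 y u3 v1 u4 v2 +
      (x * x + x * x - (1 - b)) * Fq (b-1) (-b) (-x) 1 0 0 1 x u2 y u3 v1 u4 v2.
      by rewrite /Fq; rr.
    apply: addr_ge0; first by apply: addr_ge0; apply: hQ.
    by apply: mulr_ge0; [rewrite subr_ge0 | apply: hQ].
  have hy2 : y * y <= (1 - x * x) * (x * x + b) by rewrite -subr_ge0.
  have g2ge0 : 0 <= (1 - x * x) * (x * x + b) by apply: le_trans hy2; apply: sq_ge0.
  pose G := Num.sqrt ((1 - x * x) * (x * x + b)).
  have hGG : G * G = (1 - x * x) * (x * x + b) by rewrite -expr2 sqr_sqrtr.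
  have hyG : `|y| <= G by apply: abs_le_sqrt.
  have G0 : 0 <= G := sqrtr_ge0 _.
  case: (pm_ge0 _ _ hyG) => hGy1 hGy2.
  case: (eqVneq G 0) => hG.
  + have y0 : y = 0.
      move: hyG; rewrite hG; move=> h; apply/eqP; rewrite -normr_eq0; apply/eqP.
      by apply: le_anti; rewrite h normr_ge0.
    apply: (conv4 _ 1 0 0 0 (x, 0) (x, 0) (x, 0) (x, 0));
      rewrite ?ler01 ?lexx //= ?y0; try (by rr);
      by apply: curve_pt; rewrite -hGG hG.
  + have Gpos : 0 < G by rewrite lt0r hG.
    case: (inv_pos _ Gpos) => hk hk0.
    apply: (conv4 _ ((G + y) * (G + G)^-1) ((G - y) * (G + G)^-1) 0 0 (x, G) (x, - G) (x, G) (x, G));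
      rewrite ?lexx //=.
    * exact: mulr_ge0.
    * exact: mulr_ge0.
    * by transitivity ((G + G) * (G + G)^-1); [rr | exact: hk].
    * exact: curve_pt.
    * by apply: curve_pt; rewrite mulrNN.
    * exact: curve_pt.
    * exact: curve_pt.
    * by transitivity (x * ((G + G) * (G + G)^-1)); [rewrite hk mulr1 | rr].
    * by transitivity (y * ((G + G) * (G + G)^-1)); [rewrite hk mulr1 | rr].
- have [M hM2] : exists M, M + M = 1 + b.
    exists ((1 + b) / (1 + 1)).
    have h2 : (1 + 1 : R) != 0 by rewrite lt0r_neq0 // addr_gt0 // ltr01.
    by transitivity ((1 + b) * ((1 + 1) * (1 + 1)^-1)); [rr | rewrite mulfV // mulr1].
  have hb : b = M + M - 1 by rewrite hM2; rr.
  have Mpos : 0 < M.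
    rewrite ltNge; apply/negP => h.
    have : M + M <= 0 + 0 by apply: lerD.
    rewrite hM2 addr0 => h'.
    have : 0 < 1 + b by rewrite (_ : 1 + b = b - (-1)); [rewrite subr_gt0 | rr].
    by rewrite ltNge h'.
  have hxM : x * x < 1 - M.
    have h1 : x * x + x * x < (1 - M) + (1 - M).
      by rewrite (_ : (1 - M) + (1 - M) = 1 - b); [exact: hd | rewrite hb; rr].
    case: (ltP (x * x) (1 - M)) => // h.
    by have := lerD h h; rewrite leNgt h1.
  have key : 0 <= M * M - y * y.
    have -> : M * M - y * y =
      Fq (b-1) (-b) (-y) 0 0 1 1 x u2 y u3 v1 u4 v2 +
      Fq (b-1) (-b) (-(1 - M)) 0 1 0 1 x u2 y u3 v1 u4 v2.
      by rewrite /Fq hb; rr.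
    by apply: addr_ge0; apply: hQ.
  have hyM : `|y| <= M.
    by rewrite -(ger0_norm (ltW Mpos)) -!sqrtr_sqr !expr2; apply: ler_wsqrtr; rewrite -subr_ge0.
  have s2pos : 0 < 1 - M by apply: le_lt_trans hxM; apply: sq_ge0.
  pose s := Num.sqrt (1 - M).
  have hss : s * s = 1 - M by rewrite -expr2 sqr_sqrtr // ltW.
  have spos : 0 < s by rewrite sqrtr_gt0.
  have hxs : `|x| <= s by apply: abs_le_sqrt; apply: ltW.
  case: (pm_ge0 _ _ hyM) => hMy1 hMy2.
  case: (pm_ge0 _ _ hxs) => hsx1 hsx2.
  case: (inv_pos _ Mpos) => hkM hkM0.
  case: (inv_pos _ spos) => hkS hkS0.
  have hc : forall t, t * t = M * M -> forall r, r * r = s * s -> on_curve (b - 1) (- b) (r, t).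
    move=> t ht r hr; apply: curve_pt; rewrite ht hr hss hb; rr.
  apply: (conv4 _ ((s + x) * (s + s)^-1 * ((M + y) * (M + M)^-1))
                  ((s + x) * (s + s)^-1 * ((M - y) * (M + M)^-1))
                  ((s - x) * (s + s)^-1 * ((M + y) * (M + M)^-1))
                  ((s - x) * (s + s)^-1 * ((M - y) * (M + M)^-1))
                  (s, M) (s, - M) (- s, M) (- s, - M)); rewrite /=.
  * by apply: mulr_ge0; apply: mulr_ge0.
  * by apply: mulr_ge0; apply: mulr_ge0.
  * by apply: mulr_ge0; apply: mulr_ge0.
  * by apply: mulr_ge0; apply: mulr_ge0.
  * by transitivity ((s + s) * (s + s)^-1 * ((M + M) * (M + M)^-1)); [rr | rewrite hkS hkM mulr1].
  * by apply: hc.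
  * by apply: hc; rewrite ?mulrNN.
  * by apply: hc; rewrite ?mulrNN.
  * by apply: hc; rewrite ?mulrNN.
  * by transitivity (x * ((s + s) * (s + s)^-1) * ((M + M) * (M + M)^-1)); [rewrite hkS hkM !mulr1 | rr].
  * by transitivity (y * ((s + s) * (s + s)^-1) * ((M + M) * (M + M)^-1)); [rewrite hkS hkM !mulr1 | rr].
Qed.
End S.

Theorem mainTheorem11 (R : rcfType) (b : R) (hb1 : -1 < b) (hb0 : b != 0) :
  forall x y : R,
    conv_hull (on_curve (b - 1) (- b)) (x, y) <->
    exists u2 u3 u4 v1 v2 : R, psd (mom_mx (b - 1) (- b) x y u2 u3 u4 v1 v2).
Proof.
move=> x y; split; first exact: dir1.
by case=> [u2 [u3 [u4 [v1 [v2 h]]]]]; exact: (@dir2 R b x y hb1 u2 u3 u4 v1 v2 h).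
Qed.
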